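(* Consider two firms $i\in\{1,2\}$ that simultaneously choose whether to enter a market ($y_i=1$) or not ($y_i=0$), where, when a lump-sum subsidy $\hat\tau\ge0$ is paid to any firm that enters, firm $i$'s profit is $y_i\big[\alpha+\hat\tau+\eta(1-y_{-i})-\mathbf e_i\big]$, with $(\alpha,\eta)\in\mathbb R^2$ and $\mathbf e=(\mathbf e_1,\mathbf e_2)\sim N(0,I_2)$ observed by both firms. Suppose firms behave according to strategic ambiguity aversion (SAA): each firm enters if entering is its unique rationalizable action, and does not enter otherwise (so behavior is rationalizable and no firm enters when both actions are rationalizable for it). Let $P(\hat\tau)$ be the probability (over $\mathbf e$) that neither firm enters. Then there exist a nonempty open set $\Xi\subseteq\mathbb R^2$ and a threshold $\bar\tau>0$ such that if $(\alpha,\eta)\in\Xi$ and $\hat\tau<\bar\tau$, then the probability that the market is not served is increasing in the size of the subsidy, i.e. $P$ is increasing on $[0,\bar\tau)$.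
   Context: Rationalizable actions are those surviving iterated elimination of strictly dominated strategies in the complete-information game with the profits given. *)

(* Defs.v *)
From HB Require Import structures.
From mathcomp Require Import all_boot all_order all_algebra.
From mathcomp Require Import all_classical all_reals all_analysis.
Set Implicit Arguments. Unset Strict Implicit. Unset Printing Implicit Defensive.
Import Order.TTheory GRing.Theory Num.Theory.
Local Open Scope classical_set_scope.
Local Open Scope ring_scope.

Section EntryGame.
Context {R : realType}.

Definition profit (alpha eta tau ei : R) (yi yo : bool) : R :=
  if yi then alpha + tau + eta * (1 - (yo : nat)%:R) - ei else 0.

(* Players are indexed by bool: false = firm 1 (shock e.1), true = firm 2 (shock e.2). *)
Definition u (alpha eta tau : R) (e : R * R) (p : bool) (yp yo : bool) : R :=
  profit alpha eta tau (if p then e.2 else e.1) yp yo.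

(* Iterated elimination of strictly dominated strategies.
   [surv k p a] : action a of player p survives k rounds of elimination. *)
Fixpoint surv (alpha eta tau : R) (e : R * R) (k : nat) (p a : bool) : Prop :=
  match k with
  | 0 => True
  | k'.+1 =>
      surv alpha eta tau e k' p a /\
      ~ (exists a', surv alpha eta tau e k' p a' /\
           forall b, surv alpha eta tau e k' (~~ p) b ->
             u alpha eta tau e p a b < u alpha eta tau e p a' b)
  end.

Definition rationalizable (alpha eta tau : R) (e : R * R) (p a : bool) : Prop :=
  forall k, surv alpha eta tau e k p a.

Definition saa_enters (alpha eta tau : R) (e : R * R) (p : bool) : Prop :=
  rationalizable alpha eta tau e p true /\ ~ rationalizable alpha eta tau e p false.

Definition not_served (alpha eta tau : R) : set (R * R) :=
  [set e | ~ saa_enters alpha eta tau e false /\ ~ saa_enters alpha eta tau e true].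

Definition std_normal2 : set (R * R) -> \bar R :=
  ((normal_prob (0:R) 1) \x (normal_prob (0:R) 1))%E.

Definition prob_not_served (alpha eta tau : R) : \bar R :=
  std_normal2 (not_served alpha eta tau).

End EntryGame.

(* Main.v *)
Require Import Defs.
From HB Require Import structures.
From mathcomp Require Import all_boot all_order all_algebra.
From mathcomp Require Import all_classical all_reals all_analysis.
From mathcomp Require Import ring lra measurable_realfun.
Import Order.TTheory GRing.Theory Num.Theory.
Import numFieldTopology.Exports.
Local Open Scope classical_set_scope.
Local Open Scope ring_scope.
Ltac nlra := match goal with
 | |- is_true (?a < ?b) => let h := fresh in have h : a < b by lra; exact h
 | |- is_true (?a <= ?b) => let h := fresh in have h : a <= b by lra; exact h
 | |- _ => lra end.
Section Game.
Context {R : realType}.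
Variables (alpha eta tau : R) (e : R * R).
Local Notation surv := (surv alpha eta tau e).
Local Notation U := (u alpha eta tau e).
Definition ep (p : bool) := if p then e.2 else e.1.

Lemma uT p b : U p true b = alpha + tau - ep p + (if b then 0 else eta).
Proof. rewrite /u /profit /ep; case: b => /=; case: p => /=; ring. Qed.
Lemma uF p b : U p false b = 0.
Proof. by []. Qed.

Lemma surv_dec k p a : surv k.+1 p a -> surv k p a.
Proof. by case. Qed.

Lemma surv_decn k m p a : (k <= m)%N -> surv m p a -> surv k p a.
Proof.
move=> /subnK <-; elim: (m - k)%N => [|n IH] //= H; apply: IH; exact: surv_dec H.
Qed.

Lemma surv_nonempty k p : exists b, surv k p b.
Proof.
elim: k p => [|k IH] p; first by exists true.
have [b0 Hb0] := IH (~~ p).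
have [a Ha] := IH p.
apply: contrapT => Hne.
have Hn : forall a, ~ surv k.+1 p a by move=> a' H; apply: Hne; exists a'.
have elim1 : forall a, surv k p a -> exists a', a' <> a /\ surv k p a' /\
   forall b, surv k (~~ p) b -> U p a b < U p a' b.
  move=> a1 Ha1; have : ~ surv k.+1 p a1 by exact: Hn.
  rewrite /=; move=> /not_andP [//|/contrapT [a' [Ha' Hlt]]].
  exists a'; split=> //; move=> E; subst a'.
  by move: (Hlt b0 Hb0); rewrite ltxx.
have [a' [na' [Ha' H1]]] := elim1 a Ha.
have [a'' [na'' [Ha'' H2]]] := elim1 a' Ha'.
have E : a'' = a by move: na' na''; clear; case: a; case: a'; case: a''.
rewrite E in H2.
have := lt_trans (H1 b0 Hb0) (H2 b0 Hb0); by rewrite ltxx.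
Qed.

Lemma surv_step k p a : surv k.+1 p a <-> surv k p a /\
  ~ (surv k p (~~ a) /\ forall b, surv k (~~ p) b -> U p a b < U p (~~ a) b).
Proof.
have [b0 Hb0] := surv_nonempty k (~~ p).
split => /= [[H1 H2]|[H1 H2]]; split => //.
  by move=> H; apply: H2; exists (~~ a).
move=> [a' [Ha' Hlt]]; case: (boolP (a' == a)) => /eqP E.
  by subst a'; move: (Hlt b0 Hb0); rewrite ltxx.
have E' : a' = ~~ a by move: E; clear; case: a; case: a'.
by apply: H2; rewrite -E'.
Qed.

Lemma keepT p b : (forall k, surv k (~~ p) b) -> 0 <= U p true b ->
  forall k, surv k p true.
Proof.
move=> Hb H0; elim => [//|k IH]; apply/surv_step; split=> // [[_ H]].
by move: (H b (Hb k)); rewrite uF ltNge H0.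
Qed.

Lemma keepF p b : (forall k, surv k (~~ p) b) -> U p true b <= 0 ->
  forall k, surv k p false.
Proof.
move=> Hb H0; elim => [//|k IH]; apply/surv_step; split=> // [[_ H]].
by move: (H b (Hb k)); rewrite uF ltNge H0.
Qed.

Lemma dom_enter p : 0 < U p true true -> 0 < U p true false ->
  (forall k, surv k p true) /\ ~ surv 1 p false.
Proof.
move=> H1 H2; split.
  elim => [//|k IH]; apply/surv_step; split=> // [[_ H]].
  have [b Hb] := surv_nonempty k (~~ p).
  by move: (H b Hb); rewrite uF; case: b {Hb} => /=; rewrite ltNge ltW.
move/surv_step => [_]; apply; split=> // b _ /=.
by case: b.
Qed.

Lemma dom_out p : U p true true < 0 -> U p true false < 0 ->
  (forall k, surv k p false) /\ ~ surv 1 p true.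
Proof.
move=> H1 H2; split.
  elim => [//|k IH]; apply/surv_step; split=> // [[_ H]].
  have [b Hb] := surv_nonempty k (~~ p).
  by move: (H b Hb); rewrite uF; case: b {Hb} => /=; rewrite ltNge ltW.
move/surv_step => [_]; apply; split=> // b _ /=.
by case: b.
Qed.

Lemma both_mid : (forall p, U p true true <= 0 /\ 0 <= U p true false) ->
  forall k p a, surv k p a.
Proof.
move=> Hm; elim => [//|k IH] p a; apply/surv_step; split=> // [[_ H]].
have [h1 h2] := Hm p.
case: a H => H.
  by move: (H false (IH _ _)); rewrite [U p (~~ true) _]uF ltNge h2.
by move: (H true (IH _ _)); rewrite [U p false _]uF ltNge h1.
Qed.

End Game.
Section Game2.
Context {R : realType}.
Variables (alpha eta tau : R) (e : R * R).
Hypothesis eta_gt0 : (0:R) < eta.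
Local Notation surv := (surv alpha eta tau e).
Local Notation U := (u alpha eta tau e).
Local Notation ep := (ep e).
Local Ltac glra := have := eta_gt0; nlra.
Local Notation x := (alpha + tau).
Local Notation s := (alpha + tau + eta).

Lemma uTT p : U p true true = x - ep p.
Proof. rewrite uT; ring. Qed.
Lemma uTF p : U p true false = s - ep p.
Proof. rewrite uT; ring. Qed.

Lemma enter_dom p : ep p < x -> saa_enters alpha eta tau e p.
Proof.
move=> H.
have [A B] : (forall k, surv k p true) /\ ~ surv 1 p false.
  by apply: dom_enter; rewrite ?uTT ?uTF; glra.
by split => // Hr; apply: B; exact: Hr.
Qed.

Lemma enter_mid p : ep p < s -> s < ep (~~ p) -> saa_enters alpha eta tau e p.
Proof.
move=> H1 H2.
have [Ao Bo] : (forall k, surv k (~~ p) false) /\ ~ surv 1 (~~ p) true.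
  by apply: dom_out; rewrite ?uTT ?uTF  in H2 *; glra.
have A : forall k, surv k p true.
  by apply: (@keepT R alpha eta tau e p false) => //; rewrite uTF; glra.
split => // Hr; have := Hr 2%N; move/surv_step => [_]; apply; split; first exact: A.
case => Hb; first by case: (Bo Hb).
rewrite [U p (~~ false) _]uTF uF; glra.
Qed.

Lemma out_dom p : s < ep p -> rationalizable alpha eta tau e p false.
Proof.
move=> H; have [A _] : (forall k, surv k p false) /\ ~ surv 1 p true.
  by apply: dom_out; rewrite ?uTT ?uTF  in H *; glra.
exact: A.
Qed.

Lemma out_mm : (forall p, x <= ep p <= s) -> forall p, rationalizable alpha eta tau e p false.
Proof.
move=> H p k; apply: both_mid => q; have := H q; rewrite uTT uTF; glra.
Qed.

Lemma out_high p : s <= ep p -> s <= ep (~~ p) -> rationalizable alpha eta tau e p false.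
Proof.
move=> H1 H2.
have [E1|L1] := eqVneq (ep p) s; last first.
  by apply: out_dom; rewrite lt_neqAle eq_sym L1 H1.
have [E2|L2] := eqVneq (ep (~~ p)) s.
  apply: out_mm => q; case: (boolP (q == p)) => [/eqP -> | Hq]; first by rewrite E1; glra.
  have -> : q = ~~ p by move: Hq; clear; case: q; case: p.
  by rewrite E2 ; glra.
have [Ao _] : (forall k, surv k (~~ p) false) /\ ~ surv 1 (~~ p) true.
  have : s < ep (~~ p) by rewrite lt_neqAle eq_sym L2 H2.
  by move=> h; apply: dom_out; rewrite ?uTT ?uTF; glra.
by apply: (@keepF R alpha eta tau e p false) => //; rewrite uTF E1; glra.
Qed.
End Game2.
Lemma ns_eq {R : realType} (alpha eta tau : R) : (0:R) < eta ->
  not_served alpha eta tau =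
  (`[alpha + tau, alpha + tau + eta] `*` `[alpha + tau, alpha + tau + eta]) `|`
  (`[alpha + tau + eta, +oo[ `*` `[alpha + tau + eta, +oo[).
Proof.
move=> h; apply/seteqP; split => -[e1 e2] /=; rewrite !in_itv /= ?andbT.
- move=> [n1 n2].
  have hx1 : alpha + tau <= e1.
    rewrite leNgt; apply/negP => H; apply: n1; exact: (@enter_dom R alpha eta tau (e1, e2) h false).
  have hx2 : alpha + tau <= e2.
    rewrite leNgt; apply/negP => H; apply: n2; exact: (@enter_dom R alpha eta tau (e1, e2) h true).
  have [s1|s1] := leP e1 (alpha + tau + eta); have [s2|s2] := leP e2 (alpha + tau + eta).
  + by left; split; apply/andP; split.
  + have [E|L] := eqVneq e1 (alpha + tau + eta).
      by right; split; rewrite ?E ?lexx ?ltW.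
    exfalso; apply: n1; apply: (@enter_mid R alpha eta tau (e1, e2) h false) => //=.
    by rewrite lt_neqAle L s1.
  + have [E|L] := eqVneq e2 (alpha + tau + eta).
      by right; split; rewrite ?E ?lexx ?ltW.
    exfalso; apply: n2; apply: (@enter_mid R alpha eta tau (e1, e2) h true) => //=.
    by rewrite lt_neqAle L s2.
  + by right; split; apply: ltW.
- have Hs : forall p, rationalizable alpha eta tau (e1, e2) p false ->
     ~ saa_enters alpha eta tau (e1, e2) p.
    move=> p Hn Hs; exact: Hs.2 Hn.
  case => [[/andP [a1 b1] /andP [a2 b2]]|[c1 c2]].
    split; apply: Hs; apply: (@out_mm R alpha eta tau (e1, e2) h);
      by case => /=; rewrite ?a1 ?a2 ?b1 ?b2.
  split; apply: Hs.
    exact: (@out_high R alpha eta tau (e1, e2) h false).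
  exact: (@out_high R alpha eta tau (e1, e2) h true).
Qed.
Section Meas.
Context {R : realType}.
Local Notation mu := (normal_prob (0:R) 1).
Local Notation pk := (normal_peak (1:R)).
Local Notation leb := (@lebesgue_measure R).

Lemma pdfE (x : R) : normal_pdf 0 1 x = pk * expR (- (x ^+ 2) / 2).
Proof.
rewrite normal_pdfE ?oner_neq0 //; congr (_ * expR _).
by rewrite subr0 expr1n.
Qed.

Lemma pk_bounds : 7 / 20 <= pk /\ 0 < pk.
Proof.
have pk0 : 0 < pk by apply: normal_peak_gt0; exact: oner_neq0.
split => //.
rewrite /normal_peak; set v := (1 ^+ 2 * pi *+ 2 : R).
have hv : v <= 8.
  have h : (pi : R) / 2 < 2 := @pihalf_lt2 R.
  rewrite /v expr1n mul1r mulr2n; lra.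
have v0 : 0 <= v by rewrite /v expr1n mul1r mulr2n; have h : (0:R) <= pi := @pi_ge0 R; lra.
set q := Num.sqrt v.
have q0 : 0 <= q by exact: sqrtr_ge0.
have qq : q ^+ 2 = v by exact: sqr_sqrtr.
have qle : q <= 20 / 7 by nra.
have qpos : 0 < q by rewrite lt_neqAle q0 andbT; apply/negP => /eqP q0'; move: pk0; rewrite /normal_peak -/v -/q -q0' invr0 ltxx.
have : q^-1 * q = 1 by rewrite mulVf // gt_eqF.
nra.
Qed.

Lemma mu_fin (A : set R) : measurable A ->
  mu A = (fine (mu A))%:E /\ 0 <= fine (mu A) <= 1.
Proof.
move=> mA.
have h0 : (0 <= mu A)%E by exact: measure_ge0.
have h1 : (mu A <= 1)%E by exact: probability_le1.
have hf : mu A \is a fin_num by rewrite ge0_fin_numE // (le_lt_trans h1) // ltry.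
split; first by rewrite fineK.
rewrite fine_ge0 //=.
have -> : (1:R) = fine (1%E : \bar R) by [].
by apply: fine_le => //; rewrite inE.
Qed.

End Meas.
Section Meas2.
Context {R : realType}.
Local Notation mu := (normal_prob (0:R) 1).
Local Notation leb := (@lebesgue_measure R).

Lemma mu_ub (A : set R) (M L : R) : measurable A -> leb A = L%:E -> 0 <= M ->
  (forall y, A y -> normal_pdf 0 1 y <= M) -> (mu A <= (M * L)%:E)%E.
Proof.
move=> mA hL M0 H; rewrite /normal_prob.
apply: (@le_trans _ _ (\int[leb]_(x in A) (cst M%:E) x)%E).
  apply: ge0_le_integral => //.
  - by move=> x _; rewrite lee_fin normal_pdf_ge0.
  - by apply/measurable_EFinP; apply: measurable_funTS; exact: measurable_normal_pdf.
rewrite integral_cst //; rewrite le_eqVlt; apply/orP; left; apply/eqP; rewrite EFinM; congr (_ * _)%E; exact: hL.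
Qed.

Lemma mu_lb (A : set R) (m L : R) : measurable A -> leb A = L%:E -> 0 <= m ->
  (forall y, A y -> m <= normal_pdf 0 1 y) -> ((m * L)%:E <= mu A)%E.
Proof.
move=> mA hL m0 H; rewrite /normal_prob.
apply: (@le_trans _ _ (\int[leb]_(x in A) (cst m%:E) x)%E).
  rewrite integral_cst //; rewrite le_eqVlt; apply/orP; left; apply/eqP; rewrite EFinM; congr (_ * _)%E; symmetry; exact: hL.
apply: ge0_le_integral => //.
by apply/measurable_EFinP; apply: measurable_funTS; exact: measurable_normal_pdf.
Qed.

Lemma leb_co (a b : R) : a <= b -> leb `[a, b[ = (b - a)%:E.
Proof.
move=> ab; rewrite lebesgue_measure_itv /= lte_fin.
case: ltP => [_|ba]; first by rewrite EFinB.
have -> : b = a by apply/eqP; rewrite eq_le ab ba.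
by rewrite subrr.
Qed.
End Meas2.
Section Meas3.
Context {R : realType}.
Local Notation mu := (normal_prob (0:R) 1).
Local Notation leb := (@lebesgue_measure R).
Definition mr (A : set R) : R := fine (mu A).

Lemma muE (A : set R) : measurable A -> mu A = (mr A)%:E.
Proof. by move=> mA; have [] := mu_fin A mA. Qed.
Lemma mr_ge0 (A : set R) : measurable A -> 0 <= mr A.
Proof. by move=> mA; have [_ /andP[]] := mu_fin A mA. Qed.

Lemma leb_cc (a b : R) : a <= b -> leb `[a, b] = (b - a)%:E.
Proof.
move=> ab; rewrite lebesgue_measure_itv /= lte_fin.
case: ltP => [_|ba]; first by rewrite EFinB.
have -> : b = a by apply/eqP; rewrite eq_le ab ba.
by rewrite subrr.
Qed.
Lemma leb_oc (a b : R) : a <= b -> leb `]a, b] = (b - a)%:E.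
Proof.
move=> ab; rewrite lebesgue_measure_itv /= lte_fin.
case: ltP => [_|ba]; first by rewrite EFinB.
have -> : b = a by apply/eqP; rewrite eq_le ab ba.
by rewrite subrr.
Qed.

Lemma mr_ub (A : set R) (M L : R) : measurable A -> leb A = L%:E -> 0 <= M ->
  (forall y, A y -> normal_pdf 0 1 y <= M) -> mr A <= M * L.
Proof. by move=> mA hL M0 H; rewrite -lee_fin -muE //; exact: mu_ub. Qed.

Lemma mr_lb (A : set R) (m L : R) : measurable A -> leb A = L%:E -> 0 <= m ->
  (forall y, A y -> m <= normal_pdf 0 1 y) -> m * L <= mr A.
Proof. by move=> mA hL m0 H; rewrite -lee_fin -muE //; exact: mu_lb. Qed.

Lemma mr_sub2 (A B C D : set R) : measurable A -> measurable B ->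
  measurable C -> measurable D -> A `&` B = set0 -> A `|` B `<=` C `|` D ->
  mr A + mr B <= mr C + mr D.
Proof.
move=> mA mB mC mD AB sub.
rewrite -lee_fin !EFinD -!muE // -measureU //.
apply: le_trans (measureU2 _ _ _) => //.
by apply: le_measure => //; rewrite inE; apply: measurableU.
Qed.

Lemma mr_sub3 (A B C D : set R) : measurable A -> measurable B ->
  measurable C -> measurable D -> A `<=` B `|` C `|` D ->
  mr A <= mr B + mr C + mr D.
Proof.
move=> mA mB mC mD sub.
rewrite -lee_fin !EFinD -!muE //.
have mBC : measurable (B `|` C) by exact: measurableU.
have h1 : (mu (B `|` C `|` D) <= mu (B `|` C) + mu D)%E := measureU2 mu mBC mD.
have h2 : (mu (B `|` C) <= mu B + mu C)%E := measureU2 mu mB mC.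
have h3 : (mu A <= mu (B `|` C `|` D))%E.
  by apply: le_measure => //; rewrite inE //; exact: measurableU.
exact: le_trans h3 (le_trans h1 (leeD h2 (lexx _))).
Qed.

Lemma mr_disj1 (A B : set R) : measurable A -> measurable B -> A `&` B = set0 ->
  mr A + mr B <= 1.
Proof.
move=> mA mB AB; rewrite -lee_fin !EFinD -!muE // -measureU //.
by apply: probability_le1; exact: measurableU.
Qed.

Lemma mr_mono (A B : set R) : measurable A -> measurable B -> A `<=` B -> mr A <= mr B.
Proof.
move=> mA mB AB; rewrite -lee_fin -!muE //.
by apply: le_measure => //; rewrite inE.
Qed.
End Meas3.
Section Prod.
Context {R : realType}.
Local Notation mu := (normal_prob (0:R) 1).
Local Notation mu2 := ((normal_prob (0:R) 1) \x (normal_prob (0:R) 1))%E.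

Lemma rectE (A B : set R) : measurable A -> measurable B ->
  mu2 (A `*` B) = (mr A * mr B)%:E.
Proof. by move=> mA mB; rewrite product_measure1E // EFinM -(muE _ mA) -(muE _ mB). Qed.

Lemma P_ub (alpha eta tau : R) : (0:R) < eta ->
  (prob_not_served alpha eta tau <=
   (mr `[alpha + tau, alpha + tau + eta] ^+ 2 + mr `[alpha + tau + eta, +oo[ ^+ 2)%:E)%E.
Proof.
move=> h; rewrite /prob_not_served ns_eq // /std_normal2.
set x := alpha + tau; set s := alpha + tau + eta.
have m1 : measurable (`[x, s] `*` `[x, s]) by apply: measurableX.
have m3 : measurable (`[s, +oo[ `*` `[s, +oo[) by apply: measurableX.
apply: le_trans (measureU2 mu2 m1 m3) _.
rewrite EFinD !expr2 -!rectE //; exact: lexx.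
Qed.

Lemma P_lb (alpha eta tau : R) : (0:R) < eta ->
  ((mr `[alpha + tau, alpha + tau + eta] ^+ 2 + mr `]alpha + tau + eta, +oo[ ^+ 2)%:E
   <= prob_not_served alpha eta tau)%E.
Proof.
move=> h; rewrite /prob_not_served ns_eq // /std_normal2.
set x := alpha + tau; set s := alpha + tau + eta.
have m1 : measurable (`[x, s] `*` `[x, s]) by apply: measurableX.
have m2 : measurable (`]s, +oo[ `*` `]s, +oo[) by apply: measurableX.
have m3 : measurable (`[s, +oo[ `*` `[s, +oo[) by apply: measurableX.
have dis : (`[x, s] `*` `[x, s]) `&` (`]s, +oo[ `*` `]s, +oo[) = set0.
  apply/seteqP; split => // -[y1 y2] /= [[]]; rewrite !in_itv /= => /andP[_ a] _ [b _].
  by move: a b; rewrite andbT => a b; lra.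
apply: le_trans (_ : mu2 ((`[x, s] `*` `[x, s]) `|` (`]s, +oo[ `*` `]s, +oo[)) <= _)%E.
  rewrite EFinD !expr2 -!rectE //.
  rewrite (@measureU _ _ _ mu2) //.
apply: le_measure; rewrite ?inE; try exact: measurableU.
move=> -[y1 y2] /= [[a b]|[a b]]; [left|right] => //.
move: a b; rewrite !in_itv /= !andbT => a b; split; exact: ltW.
Qed.
End Prod.
Lemma final_ineq {R : realType} (B1 A1 B2 A2 D E : R) : 0 <= A1 -> 0 <= A2 -> 0 <= E ->
  B1 + D <= E + B2 -> A1 <= D + A2 -> B1 + A1 <= 1 -> 31 * E <= D -> 0 < D ->
  31 / 61 < B1 -> B1 ^+ 2 + A1 ^+ 2 < B2 ^+ 2 + A2 ^+ 2.
Proof.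
move=> a1 a2 e0 h1 h2 h3 h4 h5 h6.
have hb : B1 + D - E <= B2 by lra.
have hb0 : 0 <= B1 + D - E by lra.
have sB : (B1 + D - E) ^+ 2 <= B2 ^+ 2 by rewrite ler_pXn2r // ?nnegrE; lra.
have sA : A1 ^+ 2 - 2 * A1 * D <= A2 ^+ 2.
  have [le|lt] := leP D A1.
    have : A1 - D <= A2 by lra.
    have : 0 <= A1 - D by lra.
    nra.
  nra.
have key : B1 * (D - E) - A1 * D > 0 by nra.
nra.
Qed.
Lemma ratio_lemma {R : realType} (E D p e77 e81 d : R) : E <= p * e77 * d -> p * e81 * d <= D ->
  31 * e77 <= e81 -> 0 < p -> 0 < d -> 0 < e77 -> 31 * E <= D /\ 0 < D.
Proof.
move=> h1 h2 h3 p0 d0 e0.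
have pd : 0 < p * d by apply: mulr_gt0.
have : 31 * e77 * (p * d) <= e81 * (p * d) by apply: ler_wpM2r => //; exact: ltW.
have : 0 < e77 * (p * d) by apply: mulr_gt0.
nra.
Qed.
Section Analytic.
Context {R : realType}.
Local Notation pk := (normal_peak (1:R)).

Lemma pk_ge0 : 0 <= pk. Proof. by have [_ /ltW] := @pk_bounds R. Qed.

Lemma pdf_lb (c y : R) : y ^+ 2 <= c -> pk * (1 - c / 2) <= normal_pdf 0 1 y.
Proof.
move=> hy; rewrite pdfE; apply: ler_wpM2l; first exact: pk_ge0.
have := expR_ge1Dx (- (y ^+ 2) / 2); lra.
Qed.

Lemma pdf_ub (c y : R) : c <= y ^+ 2 -> normal_pdf 0 1 y <= pk * expR (- c / 2).
Proof.
move=> hy; rewrite pdfE; apply: ler_wpM2l; first exact: pk_ge0.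
rewrite ler_expR; lra.
Qed.

Lemma mr_set0 : mr (set0 : set R) = 0.
Proof. by rewrite /mr measure0. Qed.

Lemma mr_split (a b c : R) : a <= b -> b <= c ->
  mr `[a, b[ + mr `[b, c[ <= mr `[a, c[.
Proof.
move=> ab bc; rewrite -[leRHS]addr0 -mr_set0; apply: mr_sub2 => //.
- apply/seteqP; split => // y /= []; rewrite !in_itv /= => /andP[_ h1] /andP[h2 _].
  lra.
- move=> y /= [|]; rewrite !in_itv /= => /andP[h1 h2]; left; apply/andP; split; lra.
Qed.

Lemma slab (a b k : R) : - k <= a -> a <= b -> b <= k -> k ^+ 2 <= 2 ->
  pk * (1 - k ^+ 2 / 2) * (b - a) <= mr `[a, b[.
Proof.
move=> ka ab bk k2; apply: mr_lb => //.
- exact: leb_co.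
- apply: mulr_ge0; first exact: pk_ge0. lra.
- move=> y /=; rewrite in_itv /= => /andP[h1 h2]; apply: pdf_lb; nra.
Qed.

Lemma center_lb : 1519 / 1000 * pk <= mr `[(-6/5 : R), 6/5[.
Proof.
have s1 : pk * (1 - (6/5) ^+ 2 / 2) * (-9/10 - -6/5) <= mr `[(-6/5 : R), -9/10[.
  by apply: slab; lra.
have s2 : pk * (1 - (9/10) ^+ 2 / 2) * (-1/2 - -9/10) <= mr `[(-9/10 : R), -1/2[.
  by apply: slab; lra.
have s3 : pk * (1 - (1/2) ^+ 2 / 2) * (1/2 - -1/2) <= mr `[(-1/2 : R), 1/2[.
  by apply: slab; lra.
have s4 : pk * (1 - (9/10) ^+ 2 / 2) * (9/10 - 1/2) <= mr `[(1/2 : R), 9/10[.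
  by apply: slab; lra.
have s5 : pk * (1 - (6/5) ^+ 2 / 2) * (6/5 - 9/10) <= mr `[(9/10 : R), 6/5[.
  by apply: slab; lra.
have t1 : mr `[(-6/5 : R), -9/10[ + mr `[-9/10, -1/2[ <= mr `[-6/5, -1/2[.
  by apply: mr_split; lra.
have t2 : mr `[(-6/5 : R), -1/2[ + mr `[-1/2, 1/2[ <= mr `[-6/5, 1/2[.
  by apply: mr_split; lra.
have t3 : mr `[(-6/5 : R), 1/2[ + mr `[1/2, 9/10[ <= mr `[-6/5, 9/10[.
  by apply: mr_split; lra.
have t4 : mr `[(-6/5 : R), 9/10[ + mr `[9/10, 6/5[ <= mr `[-6/5, 6/5[.
  by apply: mr_split; lra.
lra.
Qed.

Lemma exp_ratio : 31 * expR (- (77 : R) / 2) <= expR (- (81 / 25) / 2).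
Proof.
have -> : (- (81 / 25) / 2 : R) = - 77 / 2 + 922 / 25 by field.
rewrite expRD.
have h1 := expR_ge1Dx (922 / 25 : R).
have h2 : 0 < expR (- (77 : R) / 2) := expR_gt0 _.
nra.
Qed.
End Analytic.
Section Core.
Context {R : realType}.
Local Notation pk := (normal_peak (1:R)).

Lemma core (alpha eta tau1 tau2 : R) : -91/10 < alpha -> alpha < -89/10 ->
  52/5 < eta -> eta < 53/5 -> 0 <= tau1 -> tau1 < tau2 -> tau2 < 1/10 ->
  (prob_not_served alpha eta tau1 < prob_not_served alpha eta tau2)%E.
Proof.
move=> a1 a2 e1 e2 t0 t12 t2.
have he : (0:R) < eta by lra.
apply: le_lt_trans (P_ub alpha eta tau1 he) _.
apply: lt_le_trans (P_lb alpha eta tau2 he).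
rewrite lte_fin.
set x1 := alpha + tau1; set s1 := alpha + tau1 + eta.
set x2 := alpha + tau2; set s2 := alpha + tau2 + eta.
have [pk1 pk0] := @pk_bounds R.
have mI : forall (i : interval R), measurable [set` i] by move=> i; exact: measurable_itv.
have Z0 : mr `[s1, s1] <= 0.
  have := @mr_ub R `[s1, s1] pk (s1 - s1) (mI _) (@leb_cc R s1 s1 (lexx _)) (ltW pk0).
  rewrite subrr mulr0; apply => y _; exact: normal_pdf_ub.
have Eub : mr `[x1, x2[ <= pk * expR (- (77 : R) / 2) * (x2 - x1).
  apply: mr_ub => //; first by apply: leb_co; rewrite /x1 /x2; lra.
    by apply: mulr_ge0; [exact: ltW | exact: expR_ge0].
  move=> y /=; rewrite in_itv /= => /andP[h1 h2]; apply: pdf_ub.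
  rewrite /x1 /x2 in h1 h2; nra.
have Dlb : pk * expR (- (81 / 25 : R) / 2) * (s2 - s1) <= mr `]s1, s2].
  apply: mr_lb => //; first by apply: leb_oc; rewrite /s1 /s2; lra.
    by apply: mulr_ge0; [exact: ltW | exact: expR_ge0].
  move=> y /=; rewrite in_itv /= => /andP[h1 h2]; rewrite pdfE.
  apply: ler_wpM2l; first exact: ltW.
  rewrite ler_expR. rewrite /s1 /s2 in h1 h2. nra.
have er := @exp_ratio R.
have ep : 0 < expR (- (77 : R) / 2) := expR_gt0 _.
have hd : x2 - x1 = s2 - s1 by rewrite /x1 /x2 /s1 /s2; ring.
have d0 : 0 < s2 - s1 by rewrite /s1 /s2; lra.
rewrite hd in Eub; have Eub' := Eub; clear Eub.
apply: (@final_ineq R _ _ _ _ (mr `]s1, s2]) (mr `[x1, x2[)).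
- exact: mr_ge0.
- exact: mr_ge0.
- exact: mr_ge0.
- apply: mr_sub2 => //.
  + apply/seteqP; split => // y /= []; rewrite !in_itv /= => /andP[_ h1] /andP[h2 _].
    lra.
  + move=> y /= [|]; rewrite !in_itv /= => /andP[h1 h2].
      have [l|l] := ltP y x2; [left|right]; apply/andP; split => //; rewrite /x1 /x2 /s1 /s2 in h1 h2 l *; lra.
    have [l|l] := ltP y x2; [left|right]; apply/andP; split => //; rewrite /x1 /x2 /s1 /s2 in h1 h2 l *; lra.
- have := @mr_sub3 R `[s1, +oo[ `[s1, s1] `]s1, s2] `]s2, +oo[ (mI _) (mI _) (mI _) (mI _).
  have hh : `[s1, +oo[ `<=` `[s1, s1] `|` `]s1, s2] `|` `]s2, +oo[.
    move=> y /=; rewrite !in_itv /= !andbT => h1.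
    have [l|r] := leP y s1.
      by left; left; apply/andP; split.
    have [l2|r2] := leP y s2.
      by left; right; apply/andP; split.
    by right.
  move/(_ hh); lra.
- have := @mr_sub3 R `[s1, +oo[ `[s1, s1] `]s1, +oo[ `[s1, s1] (mI _) (mI _) (mI _) (mI _).
  have hh : `[s1, +oo[ `<=` `[s1, s1] `|` `]s1, +oo[ `|` `[s1, s1].
    move=> y /=; rewrite !in_itv /= !andbT => h1.
    have [l|r] := leP y s1.
      by left; left; apply/andP; split.
    by left; right.
  move/(_ hh) => h.
  have := @mr_disj1 R `[x1, s1] `]s1, +oo[ (mI _) (mI _).
  have dd : `[x1, s1] `&` `]s1, +oo[ = set0.
    apply/seteqP; split => // y /= []; rewrite !in_itv /= andbT => /andP[_ h1] h2.
    lra.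
  move/(_ dd); lra.
- by have [] := @ratio_lemma R _ _ _ _ _ _ Eub' Dlb er pk0 d0 ep.
- by have [] := @ratio_lemma R _ _ _ _ _ _ Eub' Dlb er pk0 d0 ep.
- have c := @center_lb R.
  have m : mr `[(-6/5 : R), 6/5[ <= mr `[x1, s1].
    apply: mr_mono => // y /=; rewrite !in_itv /= => /andP[h1 h2].
    apply/andP; split; rewrite /x1 /s1; lra.
  lra.
Qed.
End Core.
Theorem proposition8 (R : realType) :
  exists (Xi : set (R * R)) (taubar : R),
    open Xi /\ Xi !=set0 /\ 0 < taubar /\
    forall alpha eta : R, Xi (alpha, eta) ->
      forall tau1 tau2 : R, 0 <= tau1 -> tau1 < tau2 -> tau2 < taubar ->
        (prob_not_served alpha eta tau1 < prob_not_served alpha eta tau2)%E.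
Proof.
exists (ball ((-9 : R), (21/2 : R)) (1/10)), (1/10).
split; first exact: ball_open.
split; first by exists ((-9 : R), (21/2 : R)); apply: ballxx; lra.
split; first lra.
move=> alpha eta Hb tau1 tau2 t0 t12 t2.
move: Hb; rewrite /ball /= /prod_ball /= => -[].
rewrite /ball /= !ltr_norml => /andP[a1 a2] /andP[b1 b2].
apply: core => //; lra.
Qed.
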